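(* Let $n\ge1$. Let $\Gamma_1$ be a cocompact lattice in the $(4n+1)$-dimensional Heisenberg group $H_{2n}$. Let $\Gamma_2$ be a discrete subgroup of the universal cover $\widetilde{SL(2,\mathbb R)}$ with compact quotient. Then the compact manifold $(H_{2n}\times\widetilde{SL(2,\mathbb R)})/(\Gamma_1\times\Gamma_2)$ admits an invariant HPKT structure which is not strong.
   Context: The Heisenberg Lie algebra $\mathfrak h_{2n}$ has basis $X_1,\dots,X_{2n},Y_1,\dots,Y_{2n},Z$ with nonzero brackets $[X_j,Y_j]=Z$. $H_{2n}$ is the corresponding simply connected Lie group. An almost hyper-paracomplex structure on a manifold is a triple $(J_1,J_2,J_3)$ of endomorphisms of the tangent bundle with $J_1^2=J_2^2=\mathrm{id}$, $J_3^2=-\mathrm{id}$ and $J_1J_2=-J_2J_1=J_3$. It is hyper-paracomplex if each $J_a$ has vanishing Nijenhuis tensor. A metric $g$ is hyperparahermitian if $g(J_1X,J_1Y)=g(J_2X,J_2Y)=-g(J_3X,J_3Y)=-g(X,Y)$. An HPKT structure is a hyper-paracomplex structure together with a hyperparahermitian metric admitting a linear connection $\nabla$ with $\nabla g=\nabla J_a=0$ and totally skew-symmetric torsion $T^\nabla$. It is strong if the torsion 3-form is closed. ''Invariant'' means induced by left-invariant structures on the group, with the discrete subgroup acting by left translations. *)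

(* Defs.v *)
From HB Require Import structures.
From mathcomp Require Import all_boot all_order all_algebra.
From mathcomp Require Import reals.
Set Implicit Arguments. Unset Strict Implicit. Unset Printing Implicit Defensive.
Import Order.TTheory GRing.Theory Num.Theory.
Local Open Scope ring_scope.

(* Vectors of a Lie algebra of dimension m are column vectors 'cV[R]_m;
   endomorphisms are matrices acting on the left (J X := J *m X). *)

Section LieAlgebraStructures.
Variables (R : realType) (m : nat).
Variable br : 'cV[R]_m -> 'cV[R]_m -> 'cV[R]_m.

Definition bform (G : 'M[R]_m) (X Y : 'cV[R]_m) : R := (X^T *m G *m Y) 0 0.

Definition is_metric (G : 'M[R]_m) : Prop := G^T = G /\ G \in unitmx.

Definition almost_hyper_paracomplex (J1 J2 J3 : 'M[R]_m) : Prop :=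
  [/\ J1 *m J1 = 1%:M, J2 *m J2 = 1%:M, J3 *m J3 = - 1%:M,
      J1 *m J2 = J3 & J2 *m J1 = - J3].

(* Nijenhuis tensor of a left-invariant endomorphism J (general formula,
   valid for J^2 = id and J^2 = -id) *)
Definition nijenhuis (J : 'M[R]_m) (X Y : 'cV[R]_m) : 'cV[R]_m :=
  br (J *m X) (J *m Y) - J *m br (J *m X) Y - J *m br X (J *m Y)
  + J *m (J *m br X Y).

Definition integrable (J : 'M[R]_m) : Prop :=
  forall X Y, nijenhuis J X Y = 0.

Definition hyper_paracomplex (J1 J2 J3 : 'M[R]_m) : Prop :=
  [/\ almost_hyper_paracomplex J1 J2 J3,
      integrable J1, integrable J2 & integrable J3].

Definition hyperparahermitian (J1 J2 J3 G : 'M[R]_m) : Prop :=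
  is_metric G /\
  forall X Y,
  [/\ bform G (J1 *m X) (J1 *m Y) = - bform G X Y,
      bform G (J2 *m X) (J2 *m Y) = - bform G X Y &
      bform G (J3 *m X) (J3 *m Y) = bform G X Y].

(* A left-invariant linear connection is given by Gam i = nabla_{e_i}. *)
Definition nabla (Gam : 'I_m -> 'M[R]_m) (X Y : 'cV[R]_m) : 'cV[R]_m :=
  (\sum_(i < m) X i 0 *: Gam i) *m Y.

Definition torsion (Gam : 'I_m -> 'M[R]_m) (X Y : 'cV[R]_m) : 'cV[R]_m :=
  nabla Gam X Y - nabla Gam Y X - br X Y.

Definition torsion3 (G : 'M[R]_m) (Gam : 'I_m -> 'M[R]_m) (X Y Z : 'cV[R]_m) : R :=
  bform G (torsion Gam X Y) Z.

Definition HPKT_connection (J1 J2 J3 G : 'M[R]_m) (Gam : 'I_m -> 'M[R]_m) : Prop :=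
  (forall X Y Z, bform G (nabla Gam X Y) Z + bform G Y (nabla Gam X Z) = 0) /\
  (forall X Y, [/\ nabla Gam X (J1 *m Y) = J1 *m nabla Gam X Y,
                  nabla Gam X (J2 *m Y) = J2 *m nabla Gam X Y &
                  nabla Gam X (J3 *m Y) = J3 *m nabla Gam X Y]) /\
  (forall X Y Z, torsion3 G Gam X Y Z = - torsion3 G Gam X Z Y).

Definition HPKT (J1 J2 J3 G : 'M[R]_m) (Gam : 'I_m -> 'M[R]_m) : Prop :=
  [/\ hyper_paracomplex J1 J2 J3, hyperparahermitian J1 J2 J3 G
    & HPKT_connection J1 J2 J3 G Gam].

(* Chevalley--Eilenberg differential of a left-invariant 3-form *)
Definition d3 (T : 'cV[R]_m -> 'cV[R]_m -> 'cV[R]_m -> R)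
    (a b c d : 'cV[R]_m) : R :=
  - T (br a b) c d + T (br a c) b d - T (br a d) b c
  - T (br b c) a d + T (br b d) a c - T (br c d) a b.

Definition strong (G : 'M[R]_m) (Gam : 'I_m -> 'M[R]_m) : Prop :=
  forall a b c d, d3 (torsion3 G Gam) a b c d = 0.

End LieAlgebraStructures.

(* The Lie algebra h_{2n} (+) sl(2,R) of H_{2n} x ~SL(2,R), dimension 4n+4.
   Coordinates: X_j = index j (j < 2n), Y_j = index 2n+j, Z = index 4n,
   sl(2,R) basis H, E, F = indices 4n+1, 4n+2, 4n+3 with
   [X_j,Y_j] = Z, [H,E] = 2E, [H,F] = -2F, [E,F] = H. *)
Definition dimg (n : nat) : nat := (4 * n + 3).+1.

Definition hsl_bracket (R : realType) (n : nat) (u v : 'cV[R]_(dimg n))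
  : 'cV[R]_(dimg n) :=
  let c (w : 'cV[R]_(dimg n)) (k : nat) := w (@inord (4 * n + 3) k) 0 in
  let iH := (4 * n + 1)%N in let iE := (4 * n + 2)%N in let iF := (4 * n + 3)%N in
  \col_(k < dimg n)
    if val k == (4 * n)%N then
      \sum_(j < 2 * n) (c u j * c v (2 * n + j)%N - c u (2 * n + j)%N * c v j)
    else if val k == iH then c u iE * c v iF - c u iF * c v iE
    else if val k == iE then 2 * (c u iH * c v iE - c u iE * c v iH)
    else if val k == iF then - 2 * (c u iH * c v iF - c u iF * c v iH)
    else 0.

(* Main.v *)
Require Import Defs.
From HB Require Import structures.
From mathcomp Require Import all_boot all_order all_algebra.
From mathcomp Require Import reals.
From mathcomp Require Import zify ring lra.
Set Implicit Arguments. Unset Strict Implicit. Unset Printing Implicit Defensive.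
Import Order.TTheory GRing.Theory Num.Theory.
Local Open Scope ring_scope.

Lemma split_nat (R : nmodType) (F : nat -> R) a b : \sum_(0 <= i < a + b) F i = \sum_(0 <= i < a) F i + \sum_(0 <= j < b) F (a + j)%N.
Proof.
rewrite (@big_cat_nat _ _ _ a) //=; last lia.
congr (_ + _).
rewrite -{1}(add0n a) big_addn addKn.
by apply: eq_bigr => i _; rewrite addnC.
Qed.
Lemma sum_blocks (R : nmodType) n (F : nat -> R) :
  \sum_(i < (4 * n + 3).+1) F i = \sum_(j < n) (F j + F (n + j)%N + F (2 * n + j)%N + F (3 * n + j)%N)
   + F (4 * n)%N + F (4 * n + 1)%N + F (4 * n + 2)%N + F (4 * n + 3)%N.
Proof.
rewrite -(big_mkord xpredT F).
have -> : (4 * n + 3).+1 = (n + n + n + n + 4)%N by lia.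
rewrite !split_nat !big_mkord -!big_split /=.
rewrite !big_ord_recl big_ord0 /= !addr0 -!addrA; congr (_ + _).
  apply: eq_bigr => j _ /=.
  have -> : (n + n + j = 2 * n + j)%N by lia.
  by have -> : (n + n + n + j = 3 * n + j)%N by lia.
have -> : (n + n + n + n + 0 = 4 * n)%N by lia.
have -> : (n + n + n + n + bump 0 0 = 4 * n + 1)%N by rewrite /bump; lia.
have -> : (n + n + n + n + bump 0 (bump 0 0) = 4 * n + 2)%N by rewrite /bump; lia.
have -> : (n + n + n + n + bump 0 (bump 0 (bump 0 0)) = 4 * n + 3)%N by rewrite /bump; lia.
by [].
Qed.

Lemma split2 (R : nmodType) n (F : nat -> R) :
  \sum_(j < 2 * n) F j = \sum_(j < n) (F j + F (n + j)%N).
Proof.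
rewrite -(big_mkord xpredT F).
have -> : (2 * n = n + n)%N by lia.
by rewrite split_nat !big_mkord -big_split.
Qed.

Ltac simp_if := repeat match goal with
  | |- context [if ?b then _ else _] =>
      lazymatch b with
      | context [if _ then _ else _] => fail
      | _ => first [have ->: b = true by lia | have -> : b = false by lia]
      end
  end.
Ltac range := let k := fresh in move=> k; repeat (case: ifP => ?); lia.

Section Infra.
Variables (R : realType) (n : nat).
Hypothesis hn : (1 <= n)%N.

Local Notation V := ('cV[R]_(dimg n)).
Local Notation M := ('M[R]_(dimg n)).

Definition xc (X : V) (k : nat) : R := X (@inord (4 * n + 3) k) 0.
Definition clamp (k : nat) : nat := if (k < 4 * n + 4)%N then k else 0%N.

Lemma val_inord k : nat_of_ord (@inord (4 * n + 3) k) = clamp k.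
Proof.
rewrite /inord /clamp val_insubd /=. case: ifP; case: ifP => //; lia.
Qed.

Lemma val_inord' k : val (@inord (4 * n + 3) k) = clamp k.
Proof. exact: val_inord. Qed.

Lemma sum_collapse (m : nat) (c : R) (X : V) : (m < 4 * n + 4)%N ->
  \sum_(l < dimg n) ((val l == m)%:R * c * X l 0) = c * xc X m.
Proof.
move=> hm.
have hm' : (m < dimg n)%N by rewrite /dimg; lia.
rewrite (bigD1 (Ordinal hm')) //= eqxx mul1r big1 ?addr0; first by rewrite /xc; congr (_ * X _ 0); apply: val_inj; rewrite /= inordK.
move=> l hl. have -> : (val l == m) = false.
  apply/negbTE; apply: contra hl => /eqP e; apply/eqP/val_inj => /=. by [].
by rewrite !mul0r.
Qed.

Definition mk2 (s t : nat -> nat) (a b : nat -> R) : M :=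
  \matrix_(i, k) ((val k == s i)%:R * a i + (val k == t i)%:R * b i).

Lemma mk2E s t a b (X : V) k :
  (forall k, s k < 4 * n + 4)%N -> (forall k, t k < 4 * n + 4)%N ->
  xc (mk2 s t a b *m X) k =
  a (clamp k) * xc X (s (clamp k)) + b (clamp k) * xc X (t (clamp k)).
Proof.
move=> hs ht. rewrite /xc mxE.
under eq_bigr do rewrite mxE mulrDl.
rewrite big_split /=.
rewrite !sum_collapse // val_inord //.
Qed.

Lemma xcD (A B : V) k : xc (A + B) k = xc A k + xc B k.
Proof. by rewrite /xc mxE. Qed.
Lemma xcN (A : V) k : xc (- A) k = - xc A k.
Proof. by rewrite /xc mxE. Qed.
Lemma xcB (A B : V) k : xc (A - B) k = xc A k - xc B k.
Proof. by rewrite xcD xcN. Qed.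
Lemma xcZ c (A : V) k : xc (c *: A) k = c * xc A k.
Proof. by rewrite /xc mxE. Qed.
Lemma xc0 k : xc (0 : V) k = 0.
Proof. by rewrite /xc mxE. Qed.

Lemma col_ext (A B : V) : (forall k, (k < 4 * n + 4)%N -> xc A k = xc B k) -> A = B.
Proof.
move=> h; apply/matrixP => i j. rewrite (ord1 j).
have hi : (i < 4 * n + 4)%N by have := ltn_ord i; rewrite /dimg; lia.
have := h _ hi; rewrite /xc.
by have -> : @inord (4 * n + 3) i = i by apply: val_inj; rewrite /= inordK.
Qed.

Lemma mx_ext (A B : M) : (forall X : V, A *m X = B *m X) -> A = B.
Proof.
move=> h; apply/matrixP => i k.
have := congr1 (fun N : V => N i 0) (h (delta_mx k 0)).
by rewrite -!colE !mxE.
Qed.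


Definition om (X Y : V) : R :=
  \sum_(j < n) (xc X j * xc Y (2 * n + j)%N - xc X (2 * n + j)%N * xc Y j
              + xc X (n + j)%N * xc Y (3 * n + j)%N - xc X (3 * n + j)%N * xc Y (n + j)%N).

Definition gV (X Y : V) : R :=
  \sum_(j < n) (xc X j * xc Y (3 * n + j)%N - xc X (n + j)%N * xc Y (2 * n + j)%N
              - xc X (2 * n + j)%N * xc Y (n + j)%N + xc X (3 * n + j)%N * xc Y j).

Lemma brE (u v : V) k : xc (@hsl_bracket R n u v) k =
  if clamp k == (4 * n)%N then om u v
  else if clamp k == (4 * n + 1)%N then xc u (4 * n + 2)%N * xc v (4 * n + 3)%N - xc u (4 * n + 3)%N * xc v (4 * n + 2)%N
  else if clamp k == (4 * n + 2)%N then 2 * (xc u (4 * n + 1)%N * xc v (4 * n + 2)%N - xc u (4 * n + 2)%N * xc v (4 * n + 1)%N)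
  else if clamp k == (4 * n + 3)%N then - 2 * (xc u (4 * n + 1)%N * xc v (4 * n + 3)%N - xc u (4 * n + 3)%N * xc v (4 * n + 1)%N)
  else 0.
Proof.
rewrite {1}/xc /hsl_bracket mxE /= ?val_inord ?val_inord'.
congr (if _ then _ else _).
rewrite (@split2 _ n (fun j : nat => u (@inord (4 * n + 3) j) 0 * v (@inord (4 * n + 3) (2 * n + j)) 0 - u (@inord (4 * n + 3) (2 * n + j)) 0 * v (@inord (4 * n + 3) j) 0)).
rewrite /om; apply: eq_bigr => j _; rewrite /xc.
have -> : (2 * n + (n + j) = 3 * n + j)%N by lia.
by rewrite addrA.
Qed.


Lemma blocks k : (k < 4 * n + 4)%N ->
  (exists2 j, j < n & k = j)%N \/ (exists2 j, j < n & k = n + j)%N \/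
  (exists2 j, j < n & k = 2 * n + j)%N \/ (exists2 j, j < n & k = 3 * n + j)%N \/
  k = (4 * n)%N \/ k = (4 * n + 1)%N \/ k = (4 * n + 2)%N \/ k = (4 * n + 3)%N.
Proof.
move=> hk.
case: (ltnP k n) => h1; first by left; exists k.
case: (ltnP k (2 * n)) => h2; first by right; left; exists (k - n)%N; lia.
case: (ltnP k (3 * n)) => h3; first by right; right; left; exists (k - 2 * n)%N; lia.
case: (ltnP k (4 * n)) => h4; first by right; right; right; left; exists (k - 3 * n)%N; lia.
do 4 right. lia.
Qed.

Definition s1 k := (if k < 4 * n then k else if k == 4 * n then 4 * n + 1
   else if k == 4 * n + 1 then 4 * n else if k == 4 * n + 2 then 4 * n + 2
   else if k == 4 * n + 3 then 4 * n + 3 else 0)%N.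
Definition a1 k : R := if (k < 2 * n)%N then 1 else if (k < 4 * n)%N then -1
   else if (k == 4 * n + 2)%N then -1 else 1.
Definition z0 (k : nat) := 0%N.
Definition r0 (k : nat) : R := 0.

Definition s2 k := (if k < n then 2 * n + k else if k < 2 * n then 3 * n + (k - n)
   else if k < 3 * n then k - 2 * n else if k < 4 * n then n + (k - 3 * n)
   else if k == 4 * n then 4 * n + 2 else if k == 4 * n + 1 then 4 * n + 2
   else if k == 4 * n + 2 then 4 * n else if k == 4 * n + 3 then 4 * n else 0)%N.
Definition t2 k := (if k < 4 * n then 0 else if k == 4 * n then 4 * n + 3
   else if k == 4 * n + 1 then 4 * n + 3 else if k == 4 * n + 2 then 4 * n + 1
   else if k == 4 * n + 3 then 4 * n + 1 else 0)%N.
Definition a2 k : R := if (k < 4 * n)%N then 1 else if (k < 4 * n + 2)%N then 2^-1 else 1.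
Definition b2 k : R := if (k < 4 * n)%N then 0 else if (k == 4 * n)%N then 2^-1
   else if (k == 4 * n + 1)%N then - 2^-1 else if (k == 4 * n + 2)%N then 1 else -1.
Definition a3 k : R := if (k < 2 * n)%N then 1 else if (k < 4 * n)%N then -1
   else if (k < 4 * n + 2)%N then 2^-1 else if (k == 4 * n + 2)%N then -1 else 1.
Definition b3 k : R := if (k < 4 * n)%N then 0 else if (k == 4 * n)%N then - 2^-1
   else if (k == 4 * n + 1)%N then 2^-1 else -1.

Definition sG k := (if k < n then 3 * n + k else if k < 2 * n then 2 * n + (k - n)
   else if k < 3 * n then n + (k - 2 * n) else if k < 4 * n then k - 3 * n
   else if k == 4 * n then 4 * n else if k == 4 * n + 1 then 4 * n + 1
   else if k == 4 * n + 2 then 4 * n + 3 else if k == 4 * n + 3 then 4 * n + 2 else 0)%N.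
Definition aG k : R := if (k < n)%N then 1 else if (k < 3 * n)%N then -1
   else if (k < 4 * n)%N then 1 else if (k == 4 * n)%N then 2
   else if (k == 4 * n + 1)%N then -2 else -1.
Definition aGi k : R := if (k < n)%N then 1 else if (k < 3 * n)%N then -1
   else if (k < 4 * n)%N then 1 else if (k == 4 * n)%N then 2^-1
   else if (k == 4 * n + 1)%N then - 2^-1 else -1.

Definition sP k := (if k < n then n + k else if k < 2 * n then k - n
   else if k < 3 * n then 3 * n + (k - 2 * n) else if k < 4 * n then 2 * n + (k - 3 * n) else 0)%N.
Definition aP k : R := if (k < n)%N then -1 else if (k < 2 * n)%N then 1
   else if (k < 3 * n)%N then -1 else if (k < 4 * n)%N then 1 else 0.

Lemma z0_lt k : (z0 k < 4 * n + 4)%N. Proof. rewrite /z0; lia. Qed.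
Lemma s1_lt k : (s1 k < 4 * n + 4)%N. Proof. rewrite /s1; move: k; range. Qed.
Lemma s2_lt k : (s2 k < 4 * n + 4)%N. Proof. rewrite /s2; move: k; range. Qed.
Lemma t2_lt k : (t2 k < 4 * n + 4)%N. Proof. rewrite /t2; move: k; range. Qed.
Lemma sG_lt k : (sG k < 4 * n + 4)%N. Proof. rewrite /sG; move: k; range. Qed.
Lemma sP_lt k : (sP k < 4 * n + 4)%N. Proof. rewrite /sP; move: k; range. Qed.

Definition J1 := mk2 s1 z0 a1 r0.
Definition J2 := mk2 s2 t2 a2 b2.
Definition J3 := mk2 s2 t2 a3 b3.
Definition Gm := mk2 sG z0 aG r0.
Definition Gi := mk2 sG z0 aGi r0.
Definition Pm := mk2 sP z0 aP r0.

Lemma J1E X k : xc (J1 *m X) k = a1 (clamp k) * xc X (s1 (clamp k)) + r0 (clamp k) * xc X (z0 (clamp k)).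
Proof. exact: mk2E s1_lt z0_lt. Qed.
Lemma J2E X k : xc (J2 *m X) k = a2 (clamp k) * xc X (s2 (clamp k)) + b2 (clamp k) * xc X (t2 (clamp k)).
Proof. exact: mk2E s2_lt t2_lt. Qed.
Lemma J3E X k : xc (J3 *m X) k = a3 (clamp k) * xc X (s2 (clamp k)) + b3 (clamp k) * xc X (t2 (clamp k)).
Proof. exact: mk2E s2_lt t2_lt. Qed.
Lemma GE X k : xc (Gm *m X) k = aG (clamp k) * xc X (sG (clamp k)) + r0 (clamp k) * xc X (z0 (clamp k)).
Proof. exact: mk2E sG_lt z0_lt. Qed.
Lemma GiE X k : xc (Gi *m X) k = aGi (clamp k) * xc X (sG (clamp k)) + r0 (clamp k) * xc X (z0 (clamp k)).
Proof. exact: mk2E sG_lt z0_lt. Qed.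
Lemma PE X k : xc (Pm *m X) k = aP (clamp k) * xc X (sP (clamp k)) + r0 (clamp k) * xc X (z0 (clamp k)).
Proof. exact: mk2E sP_lt z0_lt. Qed.

Ltac unf := rewrite /clamp /s1 /s2 /t2 /sG /sP /z0 /r0 /a1 /a2 /b2 /a3 /b3 /aG /aGi /aP.
Ltac simp := unf; simp_if; rewrite ?addKn.
Ltac vcase hk := case: (blocks hk) => [[j hj ->]|[[j hj ->]|[[j hj ->]|[[j hj ->]|[->|[->|[->|->]]]]]]].

Lemma J1J1 : J1 *m J1 = 1%:M.
Proof.
apply: mx_ext => X; rewrite -mulmxA mul1mx; apply: col_ext => k hk.
rewrite !J1E; vcase hk; simp; ring.
Qed.

Lemma two_neq0 : (2 : R) != 0. Proof. by rewrite pnatr_eq0. Qed.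
Ltac fin := first [ring | by field].

Lemma J2J2 : J2 *m J2 = 1%:M.
Proof.
apply: mx_ext => X; rewrite -mulmxA mul1mx; apply: col_ext => k hk.
rewrite !J2E; vcase hk; simp; fin.
Qed.

Lemma J3J3 : J3 *m J3 = - 1%:M.
Proof.
apply: mx_ext => X; rewrite -mulmxA mulNmx mul1mx; apply: col_ext => k hk.
rewrite xcN !J3E; vcase hk; simp; fin.
Qed.

Lemma J1J2 : J1 *m J2 = J3.
Proof.
apply: mx_ext => X; rewrite -mulmxA; apply: col_ext => k hk.
rewrite J1E !J2E J3E; vcase hk; simp; fin.
Qed.

Lemma J2J1 : J2 *m J1 = - J3.
Proof.
apply: mx_ext => X; rewrite -mulmxA mulNmx; apply: col_ext => k hk.
rewrite xcN J2E !J1E J3E; vcase hk; simp; fin.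
Qed.

Lemma sumbl (F : 'I_(dimg n) -> R) (f : nat -> R) :
  (forall i : 'I_(dimg n), F i = f i) ->
  \sum_i F i = \sum_(j < n) (f j + f (n + j)%N + f (2 * n + j)%N + f (3 * n + j)%N)
   + f (4 * n)%N + f (4 * n + 1)%N + f (4 * n + 2)%N + f (4 * n + 3)%N.
Proof. by move=> h; rewrite (eq_bigr _ (fun i _ => h i)) sum_blocks. Qed.

Lemma bform_sum (G : M) (A B : V) : bform G A B = \sum_i A i 0 * (G *m B) i 0.
Proof. by rewrite /bform -mulmxA mxE; apply: eq_bigr => i _; rewrite mxE. Qed.

Lemma bformZl (G : M) (c : R) (A B : V) : bform G (c *: A) B = c * bform G A B.
Proof. rewrite !bform_sum mulr_sumr; apply: eq_bigr => i _; by rewrite mxE mulrA. Qed.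
Lemma bformZr (G : M) (c : R) (A B : V) : bform G A (c *: B) = c * bform G A B.
Proof. rewrite !bform_sum mulr_sumr; apply: eq_bigr => i _; by rewrite -scalemxAr mxE mulrCA. Qed.
Lemma bformDl (G : M) (A1 A2 B : V) : bform G (A1 + A2) B = bform G A1 B + bform G A2 B.
Proof. rewrite !bform_sum -big_split; apply: eq_bigr => i _; by rewrite mxE mulrDl. Qed.
Lemma bformNl (G : M) (A B : V) : bform G (- A) B = - bform G A B.
Proof. rewrite !bform_sum -sumrN; apply: eq_bigr => i _; by rewrite mxE mulNr. Qed.
Lemma bformBl (G : M) (A1 A2 B : V) : bform G (A1 - A2) B = bform G A1 B - bform G A2 B.
Proof. by rewrite bformDl bformNl. Qed.

Lemma bformE (X Y : V) : bform Gm X Y = gV X Y + 2 * xc X (4 * n)%N * xc Y (4 * n)%N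
  - 2 * xc X (4 * n + 1)%N * xc Y (4 * n + 1)%N - xc X (4 * n + 2)%N * xc Y (4 * n + 3)%N
  - xc X (4 * n + 3)%N * xc Y (4 * n + 2)%N.
Proof.
rewrite bform_sum (@sumbl _ (fun k => xc X k * xc (Gm *m Y) k)); last first.
  by move=> i; rewrite /xc inord_val.
rewrite /gV -!addrA; congr (_ + _).
  apply: eq_bigr => j _; have hj := ltn_ord j; rewrite !GE; simp; ring.
rewrite !GE; simp; ring.
Qed.

Lemma om_anti (X Y : V) : om Y X = - om X Y.
Proof. rewrite /om -sumrN; apply: eq_bigr => j _; ring. Qed.
Lemma gV_sym (X Y : V) : gV Y X = gV X Y.
Proof. rewrite /gV; apply: eq_bigr => j _; ring. Qed.

Ltac sumtac := apply: eq_bigr => j _; have hj := ltn_ord j.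

Lemma omJ1J1 (X Y : V) : om (J1 *m X) (J1 *m Y) = - om X Y.
Proof. rewrite /om -sumrN; sumtac; rewrite !J1E; simp; fin. Qed.
Lemma omJ2J2 (X Y : V) : om (J2 *m X) (J2 *m Y) = - om X Y.
Proof. rewrite /om -sumrN; sumtac; rewrite !J2E; simp; fin. Qed.
Lemma omJ3J3 (X Y : V) : om (J3 *m X) (J3 *m Y) = om X Y.
Proof. rewrite /om; sumtac; rewrite !J3E; simp; fin. Qed.
Lemma omJ1l (X Y : V) : om (J1 *m X) Y = - om X (J1 *m Y).
Proof. rewrite /om -sumrN; sumtac; rewrite !J1E; simp; fin. Qed.
Lemma omJ2l (X Y : V) : om (J2 *m X) Y = - om X (J2 *m Y).
Proof. rewrite /om -sumrN; sumtac; rewrite !J2E; simp; fin. Qed.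
Lemma omJ3l (X Y : V) : om (J3 *m X) Y = - om X (J3 *m Y).
Proof. rewrite /om -sumrN; sumtac; rewrite !J3E; simp; fin. Qed.

Lemma gVJ1 (X Y : V) : gV (J1 *m X) (J1 *m Y) = - gV X Y.
Proof. rewrite /gV -sumrN; sumtac; rewrite !J1E; simp; fin. Qed.
Lemma gVJ2 (X Y : V) : gV (J2 *m X) (J2 *m Y) = - gV X Y.
Proof. rewrite /gV -sumrN; sumtac; rewrite !J2E; simp; fin. Qed.
Lemma gVJ3 (X Y : V) : gV (J3 *m X) (J3 *m Y) = gV X Y.
Proof. rewrite /gV; sumtac; rewrite !J3E; simp; fin. Qed.
Lemma gVPl (X Y : V) : gV (Pm *m X) Y = - om X Y.
Proof. rewrite /gV /om -sumrN; sumtac; rewrite !PE; simp; fin. Qed.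
Lemma gVPr (X Y : V) : gV X (Pm *m Y) = om X Y.
Proof. rewrite /gV /om; sumtac; rewrite !PE; simp; fin. Qed.
Lemma gV_br (u v Y : V) : gV (@hsl_bracket R n u v) Y = 0.
Proof. rewrite /gV big1 // => j _; have hj := ltn_ord j; rewrite !brE; simp; ring. Qed.

Notation br := (@hsl_bracket R n).

Lemma intJ1 : integrable br J1.
Proof.
move=> X Y; apply: col_ext => k hk; rewrite /nijenhuis xc0 !(xcD, xcN).
vcase hk; rewrite ?J1E; simp; rewrite ?brE; simp; rewrite ?J1E; simp; rewrite ?omJ1J1 ?omJ1l; fin.
Qed.
Lemma intJ2 : integrable br J2.
Proof.
move=> X Y; apply: col_ext => k hk; rewrite /nijenhuis xc0 !(xcD, xcN).
vcase hk; rewrite ?J2E; simp; rewrite ?brE; simp; rewrite ?J2E; simp; rewrite ?omJ2J2 ?omJ2l; fin.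
Qed.
Lemma intJ3 : integrable br J3.
Proof.
move=> X Y; apply: col_ext => k hk; rewrite /nijenhuis xc0 !(xcD, xcN).
vcase hk; rewrite ?J3E; simp; rewrite ?brE; simp; rewrite ?J3E; simp; rewrite ?omJ3J3 ?omJ3l; fin.
Qed.

Lemma bformT (A : M) (X Y : V) : bform A^T X Y = bform A Y X.
Proof.
rewrite /bform; transitivity (((Y^T *m A *m X)^T) 0 0); last by rewrite mxE.
by rewrite !trmx_mul trmxK mulmxA.
Qed.

Lemma bform_ext (A B : M) : (forall X Y, bform A X Y = bform B X Y) -> A = B.
Proof.
move=> h; apply/matrixP => i k.
have := h (delta_mx i 0) (delta_mx k 0).
by rewrite /bform trmx_delta -!rowE -!colE !mxE => ->.
Qed.

Lemma Gsym : Gm^T = Gm.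
Proof.
apply: bform_ext => X Y; rewrite bformT !bformE gV_sym; ring.
Qed.

Lemma GGi : Gm *m Gi = 1%:M.
Proof.
apply: mx_ext => X; rewrite -mulmxA mul1mx; apply: col_ext => k hk.
rewrite GE; vcase hk; simp; rewrite ?GiE; simp; fin.
Qed.

Lemma Gmetric : is_metric Gm.
Proof. by split; [exact: Gsym | exact: (mulmx1_unit GGi).1]. Qed.

Lemma hph : hyperparahermitian J1 J2 J3 Gm.
Proof.
split; first exact: Gmetric.
move=> X Y; split.
- rewrite !bformE gVJ1 ?J1E; simp; ring.
- rewrite !bformE gVJ2 ?J2E; simp; fin.
- rewrite !bformE gVJ3 ?J3E; simp; fin.
Qed.

Definition Gam (i : 'I_(dimg n)) : M := (if val i == (4 * n)%N then (2 : R) else 0) *: Pm.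

Lemma nablaE (X Y : V) : nabla Gam X Y = (2 * xc X (4 * n)%N) *: (Pm *m Y).
Proof.
rewrite /nabla.
have -> : \sum_(i < dimg n) X i 0 *: Gam i = (2 * xc X (4 * n)%N) *: Pm.
  rewrite /Gam. under eq_bigr do rewrite scalerA. rewrite -scaler_suml. congr (_ *: _).
  have h4 : (4 * n < dimg n)%N by rewrite /dimg; lia.
  rewrite (bigD1 (Ordinal h4)) //= eqxx big1 ?addr0.
    rewrite /xc mulrC; congr (_ * X _ 0); apply: val_inj; rewrite /= inordK //; lia.
  move=> i hi; have -> : (val i == (4 * n)%N) = false.
    apply/negbTE; apply: contra hi => /eqP e; apply/eqP/val_inj; by [].
  by rewrite mulr0.
by rewrite -scalemxAl.
Qed.

Lemma PJ1 : Pm *m J1 = J1 *m Pm.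
Proof.
apply: mx_ext => X; rewrite -!mulmxA; apply: col_ext => k hk.
vcase hk; rewrite ?PE ?J1E; simp; rewrite ?PE ?J1E; simp; fin.
Qed.
Lemma PJ2 : Pm *m J2 = J2 *m Pm.
Proof.
apply: mx_ext => X; rewrite -!mulmxA; apply: col_ext => k hk.
vcase hk; rewrite ?PE ?J2E; simp; rewrite ?PE ?J2E; simp; fin.
Qed.
Lemma PJ3 : Pm *m J3 = J3 *m Pm.
Proof.
apply: mx_ext => X; rewrite -!mulmxA; apply: col_ext => k hk.
vcase hk; rewrite ?PE ?J3E; simp; rewrite ?PE ?J3E; simp; fin.
Qed.

Lemma nablaJ (J : M) (X Y : V) : Pm *m J = J *m Pm ->
  nabla Gam X (J *m Y) = J *m nabla Gam X Y.
Proof. by move=> h; rewrite !nablaE -scalemxAr mulmxA h -mulmxA. Qed.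

Lemma T3E (X Y Z : V) : torsion3 br Gm Gam X Y Z =
  - 2 * xc X (4 * n)%N * om Y Z + 2 * xc Y (4 * n)%N * om X Z
  - (2 * om X Y * xc Z (4 * n)%N
     - 2 * (xc X (4 * n + 2)%N * xc Y (4 * n + 3)%N - xc X (4 * n + 3)%N * xc Y (4 * n + 2)%N) * xc Z (4 * n + 1)%N
     - 2 * (xc X (4 * n + 1)%N * xc Y (4 * n + 2)%N - xc X (4 * n + 2)%N * xc Y (4 * n + 1)%N) * xc Z (4 * n + 3)%N
     + 2 * (xc X (4 * n + 1)%N * xc Y (4 * n + 3)%N - xc X (4 * n + 3)%N * xc Y (4 * n + 1)%N) * xc Z (4 * n + 2)%N).
Proof.
rewrite /torsion3 /torsion !bformBl !nablaE !bformZl !bformE !gVPl gV_br ?PE ?brE; simp; ring.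
Qed.

Lemma conn : HPKT_connection br J1 J2 J3 Gm Gam.
Proof.
split.
  move=> X Y Z; rewrite !nablaE bformZl bformZr !bformE gVPl gVPr ?PE; simp; ring.
split.
  move=> X Y; split; apply: nablaJ; [exact: PJ1 | exact: PJ2 | exact: PJ3].
move=> X Y Z; rewrite !T3E (om_anti Y Z); ring.
Qed.

Definition ev (p : nat) : V := \col_(k < dimg n) (if val k == p then (1 : R) else 0).
Lemma evE p k : xc (ev p) k = if clamp k == p then 1 else 0.
Proof. by rewrite /xc mxE val_inord'. Qed.

Lemma om_split (X Y : V) : om X Y =
  (xc X 0 * xc Y (2 * n + 0)%N - xc X (2 * n + 0)%N * xc Y 0
   + xc X (n + 0)%N * xc Y (3 * n + 0)%N - xc X (3 * n + 0)%N * xc Y (n + 0)%N)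
  + \sum_(j < n | nat_of_ord j != 0%N) (xc X j * xc Y (2 * n + j)%N - xc X (2 * n + j)%N * xc Y j
              + xc X (n + j)%N * xc Y (3 * n + j)%N - xc X (3 * n + j)%N * xc Y (n + j)%N).
Proof.
by rewrite /om (bigD1 (Ordinal hn)) //=.
Qed.

Ltac omtac := rewrite om_split big1 ?addr0;
  [ rewrite !evE; simp; ring
  | let j := fresh "j" in let hj := fresh "hj" in let hj' := fresh "hj" in
    move=> j hj; have hj' := ltn_ord j;
    rewrite !evE; simp; ring ].

Lemma om_ab : om (ev 0) (ev (2 * n)) = 1. Proof. omtac. Qed.
Lemma om_cd : om (ev n) (ev (3 * n)) = 1. Proof. omtac. Qed.
Lemma om_ac : om (ev 0) (ev n) = 0. Proof. omtac. Qed.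
Lemma om_ad : om (ev 0) (ev (3 * n)) = 0. Proof. omtac. Qed.
Lemma om_bc : om (ev (2 * n)) (ev n) = 0. Proof. omtac. Qed.
Lemma om_bd : om (ev (2 * n)) (ev (3 * n)) = 0. Proof. omtac. Qed.

Lemma notstrong : ~ strong br Gm Gam.
Proof.
have E : d3 br (torsion3 br Gm Gam) (ev 0) (ev (2 * n)) (ev n) (ev (3 * n)) = 4.
  rewrite /d3 !T3E ?brE ?evE; simp.
  rewrite om_ab om_cd om_ac om_ad om_bc om_bd; ring.
move=> h; have := h (ev 0) (ev (2 * n)) (ev n) (ev (3 * n)).
by rewrite E => /eqP; rewrite pnatr_eq0.
Qed.

Lemma main_sec : exists (J1 J2 J3 G : 'M[R]_(dimg n)) (Gam : 'I_(dimg n) -> 'M[R]_(dimg n)),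
    HPKT (@hsl_bracket R n) J1 J2 J3 G Gam /\
    ~ strong (@hsl_bracket R n) G Gam.
Proof.
exists J1, J2, J3, Gm, Gam; split; last exact: notstrong.
split; last exact: conn; last exact: hph.
split; [ by split; [exact: J1J1 | exact: J2J2 | exact: J3J3 | exact: J1J2 | exact: J2J1]
       | exact: intJ1 | exact: intJ2 | exact: intJ3 ].
Qed.

End Infra.

Theorem mainTheorem8 (R : realType) (n : nat) (hn : (1 <= n)%N) :
  exists (J1 J2 J3 G : 'M[R]_(dimg n)) (Gam : 'I_(dimg n) -> 'M[R]_(dimg n)),
    HPKT (@hsl_bracket R n) J1 J2 J3 G Gam /\
    ~ strong (@hsl_bracket R n) G Gam.
Proof. exact: main_sec. Qed.
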